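(* Let $\mathcal{W}=\{W_x\}_{x\in\mathcal{X}}$ be a classical-quantum channel and $M\in\mathbb{N}$. Then \[ \varepsilon^{\rm NS}(M,\mathcal{W})\le\inf_{p\in\mathcal{P}(\mathcal{X})}\sup_{B=B^\dagger}\Big\{\Big(\sum_xp(x)\mathrm{Tr}[W_x\wedge MB^+]-\tfrac12\mathrm{Tr}[B^+]\Big)+\Big(\frac1M\sum_xp(x)\mathrm{Tr}[(W_x+MB^-)\wedge MB^+]-\tfrac12\mathrm{Tr}[B^+]\Big)\Big\}. \]
   Context: $\mathcal{H}$ finite-dimensional Hilbert space, $\mathcal{S}(\mathcal{H})$ its density operators, $\mathcal{P}(\mathcal{X})$ distributions on finite $\mathcal{X}$. A classical-quantum channel is $\mathcal{W}=\{W_x\}_{x\in\mathcal{X}}\subset\mathcal{S}(\mathcal{H})$. For Hermitian $B=\sum_i\lambda_i\Pi_i$ (spectral decomposition), $B^+=\sum_i\max(\lambda_i,0)\Pi_i$ and $B^-=\sum_i\max(-\lambda_i,0)\Pi_i$ (so $B=B^+-B^-$), $|B|=B^++B^-$; for Hermitian $A,C$, $A\wedge C=\frac12(A+C-|A-C|)$. For $M>0$: $1-\varepsilon^{\rm NS}(M,\mathcal{W})=\sup\{\frac1M\sum_x\mathrm{Tr}[\Lambda_xW_x]:\sum_x\Lambda_x=\mathbb{I},\ 0\preccurlyeq\Lambda_x\preccurlyeq p(x)\mathbb{I},\ p(x)\ge0,\ \sum_xp(x)=M\}$. *)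

(* Defs.v *)
From HB Require Import structures.
From mathcomp Require Import all_boot all_order all_algebra.
From mathcomp Require Import sesquilinear spectral.
From mathcomp Require Import complex.
From mathcomp Require Import all_classical all_reals.
From mathcomp Require Import ereal.

Set Implicit Arguments.
Unset Strict Implicit.
Unset Printing Implicit Defensive.

Import Order.TTheory GRing.Theory Num.Theory.
Local Open Scope ring_scope.
Local Open Scope complex_scope.

(* Positive and negative parts of a scalar; on real eigenvalues they are
   max(l,0) and max(-l,0). *)
Definition posC (R : realType) (z : R[i]) : R[i] := (z + `|z|) / 2%:R.
Definition negC (R : realType) (z : R[i]) : R[i] := (`|z| - z) / 2%:R.

Definition posmx (R : realType) n (B : 'M[R[i]]_n) : 'M[R[i]]_n :=
  invmx (spectralmx B) *m diag_mx (map_mx (@posC R) (spectral_diag B))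
    *m spectralmx B.
Definition negmx (R : realType) n (B : 'M[R[i]]_n) : 'M[R[i]]_n :=
  invmx (spectralmx B) *m diag_mx (map_mx (@negC R) (spectral_diag B))
    *m spectralmx B.
Definition absmx (R : realType) n (B : 'M[R[i]]_n) : 'M[R[i]]_n :=
  posmx B + negmx B.
Definition minmx (R : realType) n (A C : 'M[R[i]]_n) : 'M[R[i]]_n :=
  (2%:R)^-1 *: (A + C - absmx (A - C)).

Definition psdmx (R : realType) n (A : 'M[R[i]]_n) : Prop :=
  A \is hermsymmx /\ forall v : 'rV[R[i]]_n, 0 <= (v *m A *m (map_mx Num.conj (trmx v))) 0 0.
Definition loewner_le (R : realType) n (A B : 'M[R[i]]_n) : Prop :=
  psdmx (B - A).

Definition density (R : realType) n (rho : 'M[R[i]]_n) : Prop :=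
  psdmx rho /\ \tr rho = 1.

(* real trace of an operator (real part; the trace is real for Hermitian ones) *)
Definition retr (R : realType) n (A : 'M[R[i]]_n) : R := complex.Re (\tr A).

Definition distribution (R : realType) (X : finType) (p : X -> R) : Prop :=
  (forall x, 0 <= p x) /\ \sum_(x : X) p x = 1.

Definition ns_success (R : realType) (X : finType) n (M : R)
    (W : X -> 'M[R[i]]_n) : \bar R :=
  ereal_sup [set s%:E | s in
    [set s : R | exists (Lam : X -> 'M[R[i]]_n) (p : X -> R),
      [/\ \sum_(x : X) Lam x = 1%:M,
          forall x, psdmx (Lam x) /\ loewner_le (Lam x) ((p x)%:C *: 1%:M),
          forall x, 0 <= p x,
          \sum_(x : X) p x = M &
          s = M^-1 * \sum_(x : X) retr (Lam x *m W x)]]].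

Definition eps_NS (R : realType) (X : finType) n (M : R)
    (W : X -> 'M[R[i]]_n) : \bar R :=
  (1%:E - ns_success M W)%E.

Definition lemma2_obj (R : realType) (X : finType) n (M : R)
    (W : X -> 'M[R[i]]_n) (p : X -> R) (B : 'M[R[i]]_n) : R :=
  (\sum_(x : X) p x * retr (minmx (W x) (M%:C *: posmx B))
     - 2^-1 * retr (posmx B))
  + (M^-1 * \sum_(x : X) p x *
        retr (minmx (W x + M%:C *: negmx B) (M%:C *: posmx B))
     - 2^-1 * retr (posmx B)).

(* Main.v *)
Require Import Defs.
From HB Require Import structures.
From mathcomp Require Import all_boot all_order all_algebra.
From mathcomp Require Import sesquilinear spectral.
From mathcomp Require Import complex.
From mathcomp Require Import all_classical all_reals.
From mathcomp Require Import ereal.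
From mathcomp Require Import ring lra.

Set Implicit Arguments.
Unset Strict Implicit.
Unset Printing Implicit Defensive.

Import Order.TTheory GRing.Theory Num.Theory Num.Def.
Local Open Scope ring_scope.
Local Open Scope complex_scope.
Section Tool.
Variable R : realType.
Local Notation C := R[i].
Variable n : nat.
Local Notation mx := 'M[C]_n.
Local Open Scope sesquilinear_scope.

Lemma herm_tC (A : mx) : A \is hermsymmx -> A ^t* = A.
Proof. by move=> /is_hermitianmxP {2}->; rewrite expr0 scale1r. Qed.

Lemma tC_herm (A : mx) : A ^t* = A -> A \is hermsymmx.
Proof. by move=> h; apply/is_hermitianmxP; rewrite expr0 scale1r h. Qed.

Definition Fm (P : mx) (f : 'rV[C]_n) : mx := P ^t* *m diag_mx f *m P.

Lemma unitary_l (P : mx) : P \is unitarymx -> P ^t* *m P = 1%:M.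
Proof.
by move=> U; have := U; rewrite -trmxC_unitary => /unitarymxP; rewrite trmxCK.
Qed.
Lemma unitary_r (P : mx) : P \is unitarymx -> P *m P ^t* = 1%:M.
Proof. by move/unitarymxP. Qed.

Lemma tC_mul m p q (A : 'M[C]_(m,p)) (B : 'M[C]_(p,q)) : (A *m B) ^t* = B ^t* *m A ^t*.
Proof. by rewrite trmx_mul map_mxM. Qed.

Lemma tC_add m p (A B : 'M[C]_(m,p)) : (A + B) ^t* = A ^t* + B ^t*.
Proof. by rewrite linearD /= map_mxD. Qed.

Lemma tC_sub m p (A B : 'M[C]_(m,p)) : (A - B) ^t* = A ^t* - B ^t*.
Proof. by rewrite linearB /= map_mxB. Qed.

Lemma tC_scale m p (a : R) (A : 'M[C]_(m,p)) : (a%:C *: A) ^t* = a%:C *: A ^t*.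
Proof.
apply/matrixP => i j; rewrite !mxE rmorphM /=; congr (_ * _).
exact: conjc_real.
Qed.

Section FP.
Variable P : mx.
Hypothesis U : P \is unitarymx.

Lemma Fm_const a : Fm P (const_mx a) = a%:M.
Proof. by rewrite /Fm diag_const_mx scalar_mxC -mulmxA unitary_l // mulmx1. Qed.

Lemma FmD f g : Fm P (f + g) = Fm P f + Fm P g.
Proof. by rewrite /Fm linearD /= mulmxDr mulmxDl. Qed.

Lemma FmB f g : Fm P (f - g) = Fm P f - Fm P g.
Proof. by rewrite /Fm linearB /= mulmxBr mulmxBl. Qed.

Lemma FmZ a f : Fm P (a *: f) = a *: Fm P f.
Proof. by rewrite /Fm linearZ /= -!mul_scalar_mx !mulmxA scalar_mxC. Qed.

Lemma tr_Fm f : \tr (Fm P f) = \sum_j f 0 j.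
Proof. by rewrite /Fm mxtrace_mulC mulmxA unitary_r // mul1mx mxtrace_diag. Qed.

Lemma Fm_mul f g : Fm P f *m Fm P g = Fm P (\row_j (f 0 j * g 0 j)).
Proof.
rewrite /Fm; have -> : diag_mx (\row_j (f 0 j * g 0 j)) = diag_mx f *m diag_mx g.
  apply/matrixP => i j; rewrite mul_diag_mx !mxE.
  by case: (eqVneq i j) => [->|_]; rewrite ?mulr1n ?mulr0n ?mulr0.
set D := diag_mx f; set E := diag_mx g; set Q := P ^t*.
have PQ : P *m Q = 1%:M := unitary_r U.
Time rewrite -!mulmxA.
Time rewrite (mulmxA P Q) PQ mul1mx.
done.
Qed.

Lemma tr_FmFm f g : \tr (Fm P f *m Fm P g) = \sum_j f 0 j * g 0 j.
Proof. by rewrite Fm_mul tr_Fm; apply: eq_bigr => j _; rewrite mxE. Qed.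

Lemma quad_Fm (v : 'rV[C]_n) f :
  (v *m Fm P f *m v ^t*) 0 0 =
  \sum_i f 0 i * ((v *m P ^t*) 0 i * conjC ((v *m P ^t*) 0 i)).
Proof.
set w := v *m P ^t*.
have -> : v *m Fm P f *m v ^t* = w *m diag_mx f *m w ^t*.
  by rewrite /Fm /w tC_mul trmxCK !mulmxA.
rewrite mul_mx_diag !mxE; apply: eq_bigr => i _; rewrite !mxE.
by rewrite mulrAC mulrC.
Qed.

End FP.
End Tool.
Section Tool2.
Variable R : realType.
Local Notation C := R[i].
Variable n : nat.
Local Notation mx := 'M[C]_n.
Local Open Scope sesquilinear_scope.

Lemma Fm_tC (P : mx) (f : 'rV[C]_n) : (Fm P f) ^t* = Fm P (map_mx conjC f).
Proof.
by rewrite /Fm !tC_mul trmxCK tr_diag_mx map_diag_mx mulmxA.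
Qed.

Lemma Fm_herm (P : mx) (f : 'rV[C]_n) : f \is a realmx -> Fm P f \is hermsymmx.
Proof. by move=> fr; apply: tC_herm; rewrite Fm_tC realmxC. Qed.

Lemma quad_add (v : 'rV[C]_n) (A B : mx) :
  (v *m (A + B) *m v ^t*) 0 0 = (v *m A *m v ^t*) 0 0 + (v *m B *m v ^t*) 0 0.
Proof. by rewrite mulmxDr mulmxDl mxE. Qed.

Lemma psd_Fm (P : mx) (f : 'rV[C]_n) : P \is unitarymx -> (forall i, 0 <= f 0 i) -> psdmx (Fm P f).
Proof.
move=> U f0; split.
  apply: Fm_herm; apply/mxOverP => i j; rewrite ord1; exact: ger0_real.
move=> v; have := quad_Fm P v f; rewrite /= => ->.
by apply: sumr_ge0 => i _; apply: mulr_ge0 => //; exact: mul_conjC_ge0.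
Qed.

Lemma psd_herm (A : mx) : psdmx A -> A \is hermsymmx.
Proof. by case. Qed.

Lemma psd_add (A B : mx) : psdmx A -> psdmx B -> psdmx (A + B).
Proof.
move=> [hA qA] [hB qB]; split.
  by apply: tC_herm; rewrite tC_add !herm_tC.
by move=> v; have := quad_add v A B; rewrite /= => ->; apply: addr_ge0.
Qed.

Lemma psd0 : psdmx (0 : mx).
Proof.
split; first by apply: tC_herm; rewrite trmx0 map_mx0.
by move=> v; rewrite mulmx0 mul0mx mxE.
Qed.

Lemma psd_sum (I : finType) (F : I -> mx) : (forall i, psdmx (F i)) -> psdmx (\sum_i F i).
Proof.
move=> h; elim/big_ind: _ => //; [exact: psd0 | by move=> A B; apply: psd_add].
Qed.

Lemma psd_scale (a : R) (A : mx) : 0 <= a -> psdmx A -> psdmx (a%:C *: A).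
Proof.
move=> a0 [hA qA]; split.
  by apply: tC_herm; rewrite tC_scale herm_tC.
move=> v; have -> : v *m (a%:C *: A) *m v ^t* = a%:C *: (v *m A *m v ^t*).
  by rewrite -!mul_scalar_mx !mulmxA scalar_mxC.
rewrite mxE; apply: mulr_ge0 => //.
by rewrite ler0c.
Qed.

Lemma psd_row_entry (A Q : mx) i : psdmx A -> 0 <= (Q *m A *m Q ^t*) i i.
Proof.
move=> [_ qA]; have := qA (row i Q).
have -> : (row i Q *m A *m (map_mx conjC (trmx (row i Q)))) 0 0 = (Q *m A *m Q ^t*) i i.
  rewrite -row_mul !mxE; apply: eq_bigr => k _; rewrite !mxE //.
done.
Qed.

Lemma spectral_herm (A : mx) : A \is hermsymmx ->
  [/\ spectralmx A \is unitarymx, spectral_diag A \is a realmx &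
      A = Fm (spectralmx A) (spectral_diag A)].
Proof.
move=> hA; split; [exact: spectral_unitarymx | exact: hermitian_spectral_diag_real |].
have /orthomx_spectralP E := hermitian_normalmx hA.
by rewrite {1}E invmx_unitary ?spectral_unitarymx.
Qed.

Lemma posmxE (A : mx) : posmx A = Fm (spectralmx A) (map_mx (@posC R) (spectral_diag A)).
Proof. by rewrite /posmx invmx_unitary ?spectral_unitarymx. Qed.
Lemma negmxE (A : mx) : negmx A = Fm (spectralmx A) (map_mx (@negC R) (spectral_diag A)).
Proof. by rewrite /negmx invmx_unitary ?spectral_unitarymx. Qed.

Lemma diag_Fm (P : mx) (f : 'rV[C]_n) : P \is unitarymx -> P *m Fm P f *m P ^t* = diag_mx f.
Proof.
move=> U; rewrite /Fm !mulmxA unitary_r // mul1mx -mulmxA unitary_r // mulmx1 //.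
Qed.

Lemma psd_spec_ge0 (A : mx) i : psdmx A -> 0 <= spectral_diag A 0 i.
Proof.
move=> pA; have [U _ E] := spectral_herm (psd_herm pA).
have := psd_row_entry (spectralmx A) i pA.
set P := spectralmx A in U E *; set d := spectral_diag A in E *.
by rewrite [X in _ *m X *m _]E diag_Fm // mxE eqxx mulr1n.
Qed.

Lemma trPSD (A B : mx) : psdmx A -> psdmx B -> 0 <= \tr (A *m B).
Proof.
move=> pA pB; have [U _ E] := spectral_herm (psd_herm pB).
set P := spectralmx B in U E *; set d := spectral_diag B in E *.
rewrite E /Fm !mulmxA mxtrace_mulC !mulmxA.
rewrite /mxtrace; apply: sumr_ge0 => i _.
rewrite mul_mx_diag mxE; apply: mulr_ge0; first exact: psd_row_entry.
exact: psd_spec_ge0.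
Qed.

End Tool2.
Section Tool3.
Variable R : realType.
Local Notation C := R[i].
Variable n : nat.
Local Notation mx := 'M[C]_n.
Local Open Scope sesquilinear_scope.

Lemma two_neq0 : (2%:R : C) != 0.
Proof. by rewrite pnatr_eq0. Qed.

Lemma posC_negC (z : C) : posC z - negC z = z.
Proof. by rewrite /posC /negC; field. Qed.

Lemma posC_real (z : C) : z \is Num.real -> posC z = if 0 < z then z else 0.
Proof.
move=> zr; rewrite /posC; case: (real_ltgt0P zr) => [z0|z0|->].
- by field.
- by rewrite subrr mul0r.
- by rewrite addr0 mul0r.
Qed.

Lemma posC_ge0 (z : C) : z \is Num.real -> 0 <= posC z.
Proof. by move=> zr; rewrite posC_real //; case: ifP => // /ltW. Qed.

Lemma negC_ge0 (z : C) : z \is Num.real -> 0 <= negC z.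
Proof.
move=> zr; rewrite /negC; apply: divr_ge0; last by rewrite ler0n.
rewrite subr_ge0; exact: real_ler_norm.
Qed.

Lemma realmx_entry (d : 'rV[C]_n) i : d \is a realmx -> d 0 i \is Num.real.
Proof. by move/mxOverP; apply. Qed.

Lemma pos_sub_neg (A : mx) : A \is hermsymmx -> posmx A - negmx A = A.
Proof.
move=> hA; have [U _ E] := spectral_herm hA.
rewrite posmxE negmxE -FmB //.
transitivity (Fm (spectralmx A) (spectral_diag A)); last by rewrite -E.
congr (Fm _ _); by apply/matrixP => i j; rewrite !mxE posC_negC.
Qed.

Lemma psd_posmx (A : mx) : A \is hermsymmx -> psdmx (posmx A).
Proof.
move=> hA; have [U dr E] := spectral_herm hA.
rewrite posmxE; apply: psd_Fm => // i; rewrite mxE; apply: posC_ge0.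
exact: realmx_entry.
Qed.

Lemma psd_negmx (A : mx) : A \is hermsymmx -> psdmx (negmx A).
Proof.
move=> hA; have [U dr E] := spectral_herm hA.
rewrite negmxE; apply: psd_Fm => // i; rewrite mxE; apply: negC_ge0.
exact: realmx_entry.
Qed.

Lemma minmxE (A B : mx) : (A - B) \is hermsymmx -> minmx A B = A - posmx (A - B).
Proof.
move=> h; have := pos_sub_neg h.
rewrite /minmx /absmx => e.
set p := posmx (A - B) in e *; set q := negmx (A - B) in e *.
have -> : q = p - (A - B) by rewrite -e opprB addrC subrK.
move: p q e => p q _.
apply/matrixP => i j; rewrite !mxE; by field.
Qed.

Definition pproj (A : mx) : mx :=
  Fm (spectralmx A) (map_mx (fun z : C => if 0 < z then 1 else 0) (spectral_diag A)).

Lemma psd_pproj (A : mx) : psdmx (pproj A).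
Proof.
apply: psd_Fm; first exact: spectral_unitarymx.
by move=> i; rewrite mxE; case: ifP.
Qed.

Lemma psd_1_pproj (A : mx) : psdmx (1%:M - pproj A).
Proof.
have U := spectral_unitarymx A.
rewrite -(Fm_const U) /pproj -FmB //; apply: psd_Fm => // i.
by rewrite !mxE; case: ifP; rewrite ?subrr ?subr0 ?ler01.
Qed.

Lemma tr_pproj (A : mx) : A \is hermsymmx -> \tr (pproj A *m A) = \tr (posmx A).
Proof.
move=> hA; have [U dr E] := spectral_herm hA.
rewrite posmxE /pproj.
transitivity (\tr (pproj A *m Fm (spectralmx A) (spectral_diag A))); first by rewrite -E.
rewrite /pproj tr_FmFm // tr_Fm //; apply: eq_bigr => j _.
rewrite !mxE posC_real; last exact: realmx_entry.
by case: ifP; rewrite ?mul1r ?mul0r.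
Qed.

End Tool3.
Section Tool4.
Variable R : realType.
Local Notation C := R[i].
Variable n : nat.
Local Notation mx := 'M[C]_n.
Local Open Scope sesquilinear_scope.
Local Notation Re := (@complex.Re R).

Lemma realC (x : C) : x \is Num.real -> x = (Re x)%:C.
Proof.
case: x => a b; rewrite realE !lecE /= => /orP[/andP[/eqP b0 _]|/andP[/eqP b0 _]].
  by rewrite b0.
by rewrite -b0.
Qed.

Lemma Re_ge0 (z : C) : 0 <= z -> 0 <= Re z.
Proof. by case: z => a b; rewrite lecE /= => /andP[]. Qed.

Lemma ReD (x y : C) : Re (x + y) = Re x + Re y.
Proof. by case: x => ? ?; case: y. Qed.
Lemma ReN (x : C) : Re (- x) = - Re x.
Proof. by case: x. Qed.
Lemma ReB (x y : C) : Re (x - y) = Re x - Re y.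
Proof. by rewrite ReD ReN. Qed.
Lemma ReMr (a : R) (x : C) : Re (a%:C * x) = a * Re x.
Proof. by case: x => u v /=; rewrite mul0r subr0. Qed.
Lemma Re_sum (I : finType) (F : I -> C) : Re (\sum_i F i) = \sum_i Re (F i).
Proof. by apply: (big_morph _ ReD). Qed.
Lemma Re_real (a : R) : Re (a%:C) = a.
Proof. by []. Qed.

Lemma retrD (A B : mx) : retr (A + B) = retr A + retr B.
Proof. by rewrite /retr mxtraceD ReD. Qed.
Lemma retrB (A B : mx) : retr (A - B) = retr A - retr B.
Proof. by rewrite /retr linearB /= ReB. Qed.
Lemma retrZ (a : R) (A : mx) : retr (a%:C *: A) = a * retr A.
Proof. by rewrite /retr mxtraceZ ReMr. Qed.
Lemma retr_sum (I : finType) (F : I -> mx) : retr (\sum_i F i) = \sum_i retr (F i).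
Proof. by apply: (big_morph _ retrD); rewrite /retr mxtrace0. Qed.

Lemma retr_psd2 (A B : mx) : psdmx A -> psdmx B -> 0 <= retr (A *m B).
Proof. by move=> pA pB; apply: Re_ge0; exact: trPSD. Qed.

Lemma psd1 : psdmx (1%:M : mx).
Proof.
split; first exact: hermitian1mx_subproof.
move=> v; rewrite mulmx1 mxE; apply: sumr_ge0 => i _; rewrite !mxE.
exact: mul_conjC_ge0.
Qed.

Lemma psd_sc (c : R) : 0 <= c -> psdmx (c%:C *: (1%:M : mx)).
Proof. by move=> c0; apply: psd_scale => //; exact: psd1. Qed.

Lemma retr_psd (A : mx) : psdmx A -> 0 <= retr A.
Proof. by move=> pA; rewrite -[A]mulmx1; apply: retr_psd2 => //; exact: psd1. Qed.

Lemma M1 (X Z : mx) : X \is hermsymmx -> psdmx (Z - X) ->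
  retr (posmx X) <= retr (pproj X *m Z).
Proof.
move=> hX pZX; rewrite /retr -tr_pproj // -subr_ge0 -ReB -linearB -mulmxBr.
exact: (Re_ge0 (trPSD (psd_pproj X) pZX)).
Qed.

Lemma M2 (T Z : mx) : psdmx (1%:M - T) -> psdmx Z -> retr (T *m Z) <= retr Z.
Proof.
move=> pT pZ; rewrite -subr_ge0 -retrB.
have -> : Z - T *m Z = (1%:M - T) *m Z by rewrite mulmxBl mul1mx.
exact: retr_psd2.
Qed.

Lemma aux_lerB (a b c : R) : a <= c -> 0 <= b -> a - b <= c.
Proof. move=> *; lra. Qed.

Lemma M3 (T Z : mx) : psdmx T -> psdmx (1%:M - T) -> Z \is hermsymmx ->
  retr (T *m Z) <= retr (posmx Z).
Proof.
move=> pT p1T hZ; have e := pos_sub_neg hZ.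
have -> : T *m Z = T *m posmx Z - T *m negmx Z by rewrite -mulmxBr e.
rewrite retrB; have h1 := M2 p1T (psd_posmx hZ).
have h2 := retr_psd2 pT (psd_negmx hZ).
exact: (aux_lerB h1 h2).
Qed.

Lemma mono_pos (X Z : mx) : X \is hermsymmx -> Z \is hermsymmx -> psdmx (Z - X) ->
  retr (posmx X) <= retr (posmx Z).
Proof.
move=> hX hZ pZX; apply: le_trans (M1 hX pZX) _.
exact: (M3 (psd_pproj X) (psd_1_pproj X) hZ).
Qed.

Lemma pos_le_psd (X Z : mx) : X \is hermsymmx -> psdmx Z -> psdmx (Z - X) ->
  retr (posmx X) <= retr Z.
Proof.
move=> hX pZ pZX; apply: le_trans (M1 hX pZX) _.
exact: (M2 (psd_1_pproj X) pZ).
Qed.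

Lemma fro_spec (E : mx) : E \is hermsymmx ->
  retr (E *m E) = \sum_i (Re (spectral_diag E 0 i)) ^+ 2.
Proof.
move=> hE; have [U dr e] := spectral_herm hE.
set P := spectralmx E in U e *; set d := spectral_diag E in dr e *.
rewrite /retr e tr_FmFm // Re_sum; apply: eq_bigr => i _.
by rewrite [d 0 i]realC ?realmx_entry // -rmorphM.
Qed.

Lemma fro_ge0 (E : mx) : E \is hermsymmx -> 0 <= retr (E *m E).
Proof. by move=> hE; rewrite fro_spec //; apply: sumr_ge0 => i _; exact: sqr_ge0. Qed.

Lemma fro_bound (E : mx) (eps : R) : E \is hermsymmx -> 0 <= eps ->
  retr (E *m E) <= eps ^+ 2 ->
  psdmx (eps%:C *: 1%:M - E) /\ psdmx (eps%:C *: 1%:M + E).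
Proof.
move=> hE e0; rewrite fro_spec //.
have [U dr e] := spectral_herm hE.
set P := spectralmx E in U e *; set d := spectral_diag E in dr e *.
move=> hs.
have bi : forall i, (Re (d 0 i)) ^+ 2 <= eps ^+ 2.
  move=> i; apply: le_trans hs; rewrite (bigD1 i) //= lerDl.
  by apply: sumr_ge0 => j _; exact: sqr_ge0.
have sc : eps%:C *: (1%:M : mx) = Fm P (const_mx eps%:C).
  by rewrite (Fm_const U) scalemx1.
rewrite sc e -FmB // -FmD //; split; apply: psd_Fm => // i; rewrite !mxE;
  rewrite [d 0 i]realC ?realmx_entry // -?rmorphB -?rmorphD ler0c;
  have := bi i; set r := Re (d 0 i); move=> h; nra.
Qed.

End Tool4.
Section Main.
Variable R : realType.
Local Notation C := R[i].
Variable X : finType.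
Variable n : nat.
Local Notation mx := 'M[C]_n.
Variable W : X -> mx.
Variable M : nat.
Hypothesis hW : forall x, density (W x).
Hypothesis hM : (0 < M)%N.
Variable q : X -> R.
Hypothesis hq : distribution q.
Local Notation Mr := (M%:R : R).
Local Notation Re := (@complex.Re R).

Lemma Mr_gt0 : 0 < Mr.
Proof. by rewrite ltr0n. Qed.
Lemma Mr_ge1 : 1 <= Mr.
Proof. by rewrite ler1n. Qed.
Lemma q_ge0 x : 0 <= q x.
Proof. by case: hq. Qed.
Lemma sumq : \sum_x q x = 1.
Proof. by case: hq. Qed.
Lemma W_psd x : psdmx (W x).
Proof. by case: (hW x). Qed.
Lemma W_tr x : retr (W x) = 1.
Proof. by case: (hW x) => _ h; rewrite /retr h. Qed.

Definition Box (L : X -> mx) :=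
  forall x, psdmx (L x) /\ psdmx ((Mr * q x)%:C *: 1%:M - L x).
Definition Sm (L : X -> mx) : mx := \sum_x L x.
Definition sig (L : X -> mx) : R := Mr^-1 * \sum_x retr (L x *m W x).

Lemma scale1_mul (c : C) (A : mx) : (c *: 1%:M) *m A = c *: A.
Proof. by rewrite -scalemxAl mul1mx. Qed.

Lemma cbound (c : R) (L Z : mx) : psdmx Z -> psdmx (c%:C *: 1%:M - L) ->
  retr (L *m Z) <= c * retr Z.
Proof.
move=> pZ pL; have := retr_psd2 pL pZ.
by rewrite mulmxBl scale1_mul retrB retrZ subr_ge0.
Qed.

Lemma sig_ge0 L : Box L -> 0 <= sig L.
Proof.
move=> hL; apply: mulr_ge0; first by rewrite invr_ge0 ler0n.
apply: sumr_ge0 => x _; apply: retr_psd2; [exact: (proj1 (hL x))| exact: W_psd].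
Qed.

Lemma sig_le1 L : Box L -> sig L <= 1.
Proof.
move=> hL; rewrite /sig ler_pdivrMl ?Mr_gt0 // mulr1.
have -> : Mr = \sum_x (Mr * q x) by rewrite -mulr_sumr sumq mulr1.
apply: ler_sum => x _; have := cbound (W_psd x) (proj2 (hL x)).
by rewrite W_tr mulr1.
Qed.

Lemma sum_scale1 (f : X -> R) :
  \sum_x ((f x)%:C *: (1%:M : mx)) = (\sum_x f x)%:C *: 1%:M.
Proof. by rewrite -scaler_suml raddf_sum. Qed.

Lemma Sm_psd L : Box L -> psdmx (Sm L).
Proof. by move=> hL; apply: psd_sum => x; case: (hL x). Qed.

Lemma Sm_le L : Box L -> psdmx (Mr%:C *: 1%:M - Sm L).
Proof.
move=> hL; have := psd_sum (fun x => proj2 (hL x)).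
by rewrite sumrB sum_scale1 -mulr_sumr sumq mulr1.
Qed.

Definition qI : X -> mx := fun x => (q x)%:C *: 1%:M.

Lemma qI_box : Box qI.
Proof.
move=> x; split; first exact: psd_sc (q_ge0 x).
rewrite /qI -scalerBl -rmorphB; apply: psd_sc.
rewrite -{2}[q x]mul1r -mulrBl; apply: mulr_ge0; last exact: q_ge0.
by rewrite subr_ge0 Mr_ge1.
Qed.

Lemma qI_sum : Sm qI = 1%:M.
Proof. by rewrite /Sm /qI sum_scale1 sumq scale1r. Qed.

Lemma qI_sig : sig qI = Mr^-1.
Proof.
rewrite /sig /qI; under eq_bigr do rewrite scale1_mul retrZ W_tr mulr1.
by rewrite sumq mulr1.
Qed.


Lemma id_robust (a e m qq : R) (A S : mx) : 1 + e != 0 -> a = (1 + e)^-1 ->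
  (m * qq)%:C *: 1%:M - (a%:C *: A + qq%:C *: (1%:M - a%:C *: S)) =
  a%:C *: ((m * qq)%:C *: 1%:M - A) +
  qq%:C *: (a%:C *: ((e%:C *: 1%:M - (1%:M - S)) + ((m - 2%:R) * e)%:C *: 1%:M)).
Proof.
move=> e0 ->; apply/matrixP => i j; rewrite !mxE.
have e0' : (1 + e)%:C != 0 :> C by rewrite (inj_eq (@complexI R)).
rewrite !rmorphM !rmorphB !rmorphD /= fmorphV /= rmorph1 ?rmorph_nat.
move: e0'; rewrite rmorphD rmorph1 => e0'.
by field.
Qed.

Lemma id_Rm (a e : R) (S : mx) : 1 + e != 0 -> a = (1 + e)^-1 ->
  1%:M - a%:C *: S = a%:C *: (e%:C *: 1%:M + (1%:M - S)).
Proof.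
move=> e0 ->; apply/matrixP => i j; rewrite !mxE.
have e0' : (1 + e)%:C != 0 :> C by rewrite (inj_eq (@complexI R)).
rewrite fmorphV /=; move: e0'; rewrite rmorphD rmorph1 => e0'.
by field.
Qed.

Lemma robust (Sst : R) (hS : forall L, Box L -> Sm L = 1%:M -> sig L <= Sst)
  (eps : R) (L : X -> mx) : 0 <= eps -> Box L ->
  psdmx (eps%:C *: 1%:M - (1%:M - Sm L)) -> psdmx (eps%:C *: 1%:M + (1%:M - Sm L)) ->
  sig L <= Sst + eps.
Proof.
move=> e0 hL h1 h2.
case: (leqP M 1) => hM1.
  have M1 : M = 1%N by apply/eqP; rewrite eqn_leq hM1 hM.
  have := hS qI qI_box qI_sum; rewrite qI_sig M1 invr1 => hq1.
  by apply: le_trans (sig_le1 hL) _; apply: le_trans hq1 _; rewrite lerDl.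
have e1 : 1 + eps != 0 by apply: lt0r_neq0; lra.
set a := (1 + eps)^-1.
have a0 : 0 <= a by rewrite invr_ge0 addr_ge0.
set S := Sm L.
set Rm : mx := 1%:M - a%:C *: S.
have pRm : psdmx Rm by rewrite /Rm (@id_Rm a eps S e1 erefl); apply: psd_scale.
set L' := fun x => a%:C *: L x + (q x)%:C *: Rm.
have bL' : Box L'.
  move=> x; split.
    exact: (psd_add (psd_scale a0 (proj1 (hL x))) (psd_scale (q_ge0 x) pRm)).
  rewrite /L' /Rm (@id_robust a eps Mr (q x) (L x) S e1 erefl).
  apply: (psd_add (psd_scale a0 (proj2 (hL x)))).
  apply: (psd_scale (q_ge0 x)); apply: (psd_scale a0); apply: (psd_add h1); apply: psd_sc.
  apply: mulr_ge0 => //; rewrite subr_ge0 (ler_nat _ 2).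
  exact: hM1.
have sL' : Sm L' = 1%:M.
  rewrite /Sm /L' big_split /= -scaler_sumr -scaler_suml -raddf_sum sumq scale1r.
  by rewrite /Rm addrC subrK.
have le1 : a * sig L <= sig L'.
  rewrite /sig mulrCA ler_pM2l ?invr_gt0 ?Mr_gt0 // mulr_sumr.
  apply: ler_sum => x _; rewrite /L' mulmxDl retrD -!scalemxAl.
  rewrite !retrZ lerDl; apply: mulr_ge0; first exact: q_ge0.
  exact: (retr_psd2 pRm (W_psd x)).
have hSL := hS L' bL' sL'.
have hL1 := sig_le1 bL'.
have ha : (1 + eps) * a = 1 by rewrite /a mulfV.
have h0 : 0 <= 1 + eps by lra.
have : sig L <= (1 + eps) * sig L'.
  apply: le_trans (ler_wpM2l h0 le1); by rewrite mulrA ha mul1r.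
move=> h; apply: le_trans h _.
move: hSL hL1 e0; set u := sig L'; move=> *; nra.
Qed.


Definition dist2 (s : R) (L : X -> mx) : R :=
  retr ((1%:M - Sm L) *m (1%:M - Sm L)) + (s - sig L) ^+ 2.

Lemma herm_sub (A B : mx) : A \is hermsymmx -> B \is hermsymmx -> (A - B) \is hermsymmx.
Proof. by move=> hA hB; apply: tC_herm; rewrite tC_sub !herm_tC. Qed.

Lemma herm_add (A B : mx) : A \is hermsymmx -> B \is hermsymmx -> (A + B) \is hermsymmx.
Proof. by move=> hA hB; apply: tC_herm; rewrite tC_add !herm_tC. Qed.

Lemma herm_scale (c : R) (A : mx) : A \is hermsymmx -> (c%:C *: A) \is hermsymmx.
Proof. by move=> hA; apply: tC_herm; rewrite tC_scale herm_tC. Qed.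

Lemma herm1 : (1%:M : mx) \is hermsymmx.
Proof. exact: hermitian1mx_subproof. Qed.

Lemma herm_E L : Box L -> (1%:M - Sm L) \is hermsymmx.
Proof. by move=> hL; apply: herm_sub; [exact: herm1 | exact: psd_herm (Sm_psd hL)]. Qed.

Lemma dist2_ge0 s L : Box L -> 0 <= dist2 s L.
Proof. by move=> hL; apply: addr_ge0; [exact: fro_ge0 (herm_E hL) | exact: sqr_ge0]. Qed.

Lemma aux_A1 (e f g : R) : e ^+ 2 <= f -> 0 <= g -> e ^+ 2 <= f + g.
Proof. move=> *; lra. Qed.

Lemma aux_A2 (e f u s Sst d : R) : e = d / 2 -> 0 < d -> s = Sst + d -> 0 <= f ->
  u <= Sst + e -> e ^+ 2 <= f + (s - u) ^+ 2.
Proof. move=> -> d0 -> f0 hu; nra. Qed.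

Lemma stepA (Sst : R) (hS : forall L, Box L -> Sm L = 1%:M -> sig L <= Sst)
  (d : R) (L : X -> mx) : 0 < d -> Box L -> (d / 2) ^+ 2 <= dist2 (Sst + d) L.
Proof.
move=> d0 hL; have hE := herm_E hL.
have e0 : 0 <= d / 2 by apply: divr_ge0; [exact: ltW | rewrite ler0n].
case: (lerP ((d / 2) ^+ 2) (retr ((1%:M - Sm L) *m (1%:M - Sm L)))) => h.
  exact: (aux_A1 h (sqr_ge0 _)).
have [h1 h2] := fro_bound hE e0 (ltW h).
have hr := robust hS e0 hL h1 h2.
exact: (aux_A2 erefl d0 erefl (fro_ge0 hE) hr).
Qed.

Definition comb (t : R) (L0 L1 : X -> mx) : X -> mx :=
  fun x => (1 - t)%:C *: L0 x + t%:C *: L1 x.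

Lemma id_comb (c t : R) (A B : mx) :
  c%:C *: 1%:M - ((1 - t)%:C *: A + t%:C *: B) =
  (1 - t)%:C *: (c%:C *: 1%:M - A) + t%:C *: (c%:C *: 1%:M - B).
Proof.
apply/matrixP => i j; rewrite !mxE !rmorphB rmorph1 /=; ring.
Qed.

Lemma comb_box t L0 L1 : 0 <= t <= 1 -> Box L0 -> Box L1 -> Box (comb t L0 L1).
Proof.
move=> /andP[t0 t1] h0 h1 x.
have t1' : 0 <= 1 - t by rewrite subr_ge0.
split.
  exact: (psd_add (psd_scale t1' (proj1 (h0 x))) (psd_scale t0 (proj1 (h1 x)))).
rewrite /comb id_comb.
exact: (psd_add (psd_scale t1' (proj2 (h0 x))) (psd_scale t0 (proj2 (h1 x)))).
Qed.

Lemma Sm_comb t L0 L1 : Sm (comb t L0 L1) = (1 - t)%:C *: Sm L0 + t%:C *: Sm L1.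
Proof. by rewrite /Sm /comb big_split /= -!scaler_sumr. Qed.

Lemma sig_comb t L0 L1 : sig (comb t L0 L1) = (1 - t) * sig L0 + t * sig L1.
Proof.
rewrite /sig /comb.
under eq_bigr do rewrite mulmxDl retrD -!scalemxAl !retrZ.
rewrite big_split /= -!mulr_sumr; ring.
Qed.

Lemma id_E t (S0 S1 : mx) :
  1%:M - ((1 - t)%:C *: S0 + t%:C *: S1) = (1%:M - S0) - t%:C *: (S1 - S0).
Proof.
apply/matrixP => i j; rewrite !mxE !rmorphB rmorph1 /=; ring.
Qed.

Lemma retr_quad (a b : mx) (t : R) :
  retr ((a - t%:C *: b) *m (a - t%:C *: b)) =
  retr (a *m a) - 2 * t * retr (a *m b) + t ^+ 2 * retr (b *m b).
Proof.
rewrite !(mulmxBl, mulmxBr) -!scalemxAl -!scalemxAr !retrB !retrZ.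
have -> : retr (b *m a) = retr (a *m b) by rewrite /retr mxtrace_mulC.
ring.
Qed.


Lemma stepB (s eta : R) : 0 < eta ->
  exists L0, Box L0 /\ forall L, Box L -> dist2 s L0 <= dist2 s L + eta.
Proof.
move=> e0.
pose D : set R := fun y => exists L, Box L /\ y = dist2 s L.
have hlb : has_lbound D.
  by exists 0 => y [L [hL ->]]; exact: dist2_ge0.
have hne : (D !=set0)%classic by exists (dist2 s qI); exists qI; split => //; exact: qI_box.
have [e [L0 [hL0 ->]] he] := inf_adherent e0 (conj hne hlb).
exists L0; split => // L hL.
have hi : inf D <= dist2 s L by apply: (ge_inf hlb); exists L.
move: he hi; set u := inf D; move=> *; lra.
Qed.

Lemma Re_nat (k : nat) : Re (k%:R : C) = k%:R.
Proof. by elim: k => // k ih; rewrite mulrS ReD ih mulrS. Qed.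

Lemma retr1 : retr (1%:M : mx) = n%:R.
Proof. by rewrite /retr mxtrace1 Re_nat. Qed.

Lemma id_sq (c : C) (b : mx) :
  (c *: 1%:M - b) *m (c *: 1%:M + b) = (c * c) *: 1%:M - b *m b.
Proof.
rewrite mulmxBl !mulmxDr !scale1_mul -scalemxAr mulmx1 scalerA.
by rewrite opprD addrA addrK.
Qed.

Lemma bb_bound L0 L1 : Box L0 -> Box L1 ->
  retr ((Sm L1 - Sm L0) *m (Sm L1 - Sm L0)) <= Mr ^+ 2 * n%:R.
Proof.
move=> h0 h1.
have pA := psd_add (Sm_le h1) (Sm_psd h0).
have pB := psd_add (Sm_le h0) (Sm_psd h1).
have eA : Mr%:C *: 1%:M - Sm L1 + Sm L0 = Mr%:C *: 1%:M - (Sm L1 - Sm L0).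
  by move: (Sm L1) (Sm L0) => A B; apply/matrixP => i j; rewrite !mxE; ring.
have eB : Mr%:C *: 1%:M - Sm L0 + Sm L1 = Mr%:C *: 1%:M + (Sm L1 - Sm L0).
  by move: (Sm L1) (Sm L0) => A B; apply/matrixP => i j; rewrite !mxE; ring.
have := retr_psd2 pA pB; rewrite eA eB id_sq -rmorphM retrB retrZ retr1.
by rewrite subr_ge0 expr2.
Qed.

Lemma aux_C (raa rab rbb al be g N t eta : R) : 0 < g -> 0 < N ->
  t = g / (2 * N) -> eta = g ^+ 2 / (4 * N) ->
  g <= raa + al ^+ 2 -> 0 <= rbb + be ^+ 2 -> rbb + be ^+ 2 <= N ->
  raa + al ^+ 2 <= (raa - 2 * t * rab + t ^+ 2 * rbb) + (al - t * be) ^+ 2 + eta ->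
  g / 2 <= (raa - rab) + al * (al - be).
Proof.
move=> g0 N0 ht he hG hN0 hN h.
set Cc := rab + al * be; set Nn := rbb + be ^+ 2.
have h1 : 2 * t * Cc <= t ^+ 2 * Nn + eta.
  rewrite -subr_ge0.
  have -> : t ^+ 2 * Nn + eta - 2 * t * Cc =
    (raa - 2 * t * rab + t ^+ 2 * rbb + (al - t * be) ^+ 2 + eta) - (raa + al ^+ 2).
    by rewrite /Cc /Nn; ring.
  by rewrite subr_ge0.
have h2 : t ^+ 2 * Nn <= t ^+ 2 * N by apply: ler_wpM2l => //; exact: sqr_ge0.
have h3 : (g / N) * Cc <= (g / N) * (g / 2).
  have -> : g / N = 2 * t by rewrite ht; field; rewrite gt_eqF.
  have e2 : t ^+ 2 * N + eta = 2 * t * (g / 2).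
    by rewrite ht he; field; rewrite gt_eqF.
  by rewrite -e2; apply: le_trans h1 _; rewrite lerD2r.
have gN : 0 < g / N by apply: divr_gt0.
have h4 : Cc <= g / 2 by move: h3; rewrite ler_pM2l.
have -> : raa - rab + al * (al - be) = raa + al ^+ 2 - Cc by rewrite /Cc; ring.
lra.
Qed.

Lemma aux_sq (x y : R) : 0 <= x -> 0 <= y -> x <= 1 -> y <= 1 -> (y - x) ^+ 2 <= 1.
Proof. move=> *; nra. Qed.

Lemma aux_N (u v A g : R) : u <= A -> v <= 1 -> 0 <= g -> u + v <= A + 1 + g.
Proof. move=> *; lra. Qed.

Lemma stepC (Sst : R) (hS : forall L, Box L -> Sm L = 1%:M -> sig L <= Sst) (d : R) :
  0 < d -> exists L0, Box L0 /\ forall L1, Box L1 ->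
  (d / 2) ^+ 2 / 2 <= retr ((1%:M - Sm L0) *m (1%:M - Sm L1)) +
                     (Sst + d - sig L0) * (Sst + d - sig L1).
Proof.
move=> d0.
set g := (d / 2) ^+ 2.
have g0 : 0 < g by rewrite /g exprn_gt0 // divr_gt0 // ltr0n.
set N := Mr ^+ 2 * n%:R + 1 + g.
have N0 : 0 < N.
  rewrite /N; have : 0 <= Mr ^+ 2 * n%:R by apply: mulr_ge0; [exact: sqr_ge0 | rewrite ler0n].
  move=> *; lra.
set t := g / (2 * N); set eta := g ^+ 2 / (4 * N).
have eta0 : 0 < eta by rewrite /eta divr_gt0 // ?exprn_gt0 // mulr_gt0 // ltr0n.
have [L0 [hL0 hmin]] := stepB (Sst + d) eta0.
exists L0; split => // L1 hL1.
have t01 : 0 <= t <= 1.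
  apply/andP; split.
    apply: divr_ge0; [exact: ltW | apply: mulr_ge0; [by rewrite ler0n | exact: ltW]].
  have h2N : 0 < 2 * N by rewrite mulr_gt0 // ltr0n.
  rewrite /t ler_pdivrMr // mul1r.
  rewrite /N; have : 0 <= Mr ^+ 2 * n%:R by apply: mulr_ge0; [exact: sqr_ge0 | rewrite ler0n].
  move=> *; lra.
have h := hmin _ (comb_box t01 hL0 hL1).
rewrite /dist2 Sm_comb sig_comb id_E retr_quad in h.
have hA := stepA hS d0 hL0; rewrite /dist2 in hA.
have hbb := bb_bound hL0 hL1.
have hbb0 := fro_ge0 (herm_sub (psd_herm (Sm_psd hL1)) (psd_herm (Sm_psd hL0))).
have s0 := sig_ge0 hL0; have s1 := sig_ge0 hL1.
have s0' := sig_le1 hL0; have s1' := sig_le1 hL1.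
have e1 : 1%:M - Sm L1 = (1%:M - Sm L0) - (Sm L1 - Sm L0).
  by move: (Sm L1) (Sm L0) => A B; apply/matrixP => i j; rewrite !mxE; ring.
have es : Sst + d - ((1 - t) * sig L0 + t * sig L1) = (Sst + d - sig L0) - t * (sig L1 - sig L0).
  by ring.
have es2 : Sst + d - sig L1 = (Sst + d - sig L0) - (sig L1 - sig L0) by ring.
rewrite es in h; rewrite e1 mulmxBr retrB es2.
have hb2 : (sig L1 - sig L0) ^+ 2 <= 1 by exact: aux_sq.
apply: (aux_C g0 N0 erefl erefl hA _ _ h).
  by apply: addr_ge0 => //; exact: sqr_ge0.
exact: (aux_N hbb hb2 (ltW g0)).
Qed.


Lemma aux_E (Sa Sb rp rn m Mm : R) : m * Mm = 1 -> Sb <= (1 - m) * Sa + m ->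
  1 - (rp - rn + Sa) <= (1 - Sb - 2^-1 * rp) + (m * (1 + Mm * rn - Sa) - 2^-1 * rp).
Proof.
move=> hm h.
have -> : m * (1 + Mm * rn - Sa) = m + rn - m * Sa.
  by rewrite mulrBr mulrDr mulrA hm mul1r mulr1.
move: h; rewrite mulrBl mul1r => h.
lra.
Qed.

Lemma aux_E2 (O S1 S2 Sa Sb rB rp rn m Mm : R) :
  O = (S1 - 2^-1 * rp) + (m * S2 - 2^-1 * rp) ->
  S1 = 1 - Sb -> S2 = 1 + Mm * rn - Sa -> rB = rp - rn ->
  m * Mm = 1 -> Sb <= (1 - m) * Sa + m ->
  1 - (rB + Sa) <= O.
Proof. by move=> -> -> -> -> hm h; apply: aux_E. Qed.

Lemma aux_b (a b m : R) : b <= a -> b <= 1 -> 0 <= m -> m <= 1 -> b <= (1 - m) * a + m.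
Proof. move=> *; nra. Qed.

Lemma sum_qc (c : R) : \sum_x q x * c = c.
Proof. by rewrite -mulr_suml sumq mul1r. Qed.

Lemma stepE (B : mx) : B \is hermsymmx ->
  1 - (retr B + \sum_x q x * retr (posmx (W x - Mr%:C *: B))) <= lemma2_obj Mr W q B.
Proof.
move=> hB.
have pBp := psd_posmx hB; have pBn := psd_negmx hB.
have eB := pos_sub_neg hB.
have hM0 : 0 <= Mr by exact: ltW Mr_gt0.
pose a := fun x => retr (posmx (W x - Mr%:C *: B)).
pose b := fun x => retr (posmx (W x - Mr%:C *: posmx B)).
have ga : \sum_x q x * retr (posmx (W x - Mr%:C *: B)) = \sum_x q x * a x by [].
rewrite ga.
have hx1 : forall x, W x - Mr%:C *: posmx B \is hermsymmx.
  move=> x; apply: herm_sub; [exact: psd_herm (W_psd x) | exact: herm_scale (psd_herm pBp)].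
have hx2 : forall x, W x - Mr%:C *: B \is hermsymmx.
  move=> x; apply: herm_sub; [exact: psd_herm (W_psd x) | exact: herm_scale hB].
have e2 : forall x, W x + Mr%:C *: negmx B - Mr%:C *: posmx B = W x - Mr%:C *: B.
  move=> x; rewrite -[in RHS]eB; move: (W x) (posmx B) (negmx B) => A P Q.
  by apply/matrixP => i j; rewrite !mxE; ring.
have m1 : forall x, retr (minmx (W x) (Mr%:C *: posmx B)) = 1 - b x.
  by move=> x; rewrite minmxE // retrB W_tr.
have m2 : forall x, retr (minmx (W x + Mr%:C *: negmx B) (Mr%:C *: posmx B)) =
    1 + Mr * retr (negmx B) - a x.
  move=> x; rewrite minmxE ?e2 // retrB retrD W_tr retrZ //.
have hab : forall x, b x <= a x.
  move=> x; apply: (mono_pos (hx1 x) (hx2 x)).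
  have -> : W x - Mr%:C *: B - (W x - Mr%:C *: posmx B) = Mr%:C *: negmx B.
    move: (W x) (posmx B) (negmx B) eB => A P Q <-.
    by apply/matrixP => i j; rewrite !mxE; ring.
  exact: (psd_scale hM0 pBn).
have hb1 : forall x, b x <= 1.
  move=> x; rewrite -(W_tr x); apply: (pos_le_psd (hx1 x) (W_psd x)).
  have -> : W x - (W x - Mr%:C *: posmx B) = Mr%:C *: posmx B.
    by move: (W x) (posmx B) => A P; apply/matrixP => i j; rewrite !mxE; ring.
  exact: (psd_scale hM0 pBp).
clearbody a b.
have m0 : 0 <= Mr^-1 by rewrite invr_ge0.
have m1' : Mr^-1 <= 1 by rewrite -[Mr^-1]mul1r ler_pdivrMr ?Mr_gt0 // mul1r Mr_ge1.
have hSb : \sum_x q x * b x <= (1 - Mr^-1) * (\sum_x q x * a x) + Mr^-1.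
  have -> : (1 - Mr^-1) * (\sum_x q x * a x) + Mr^-1 =
      \sum_x q x * ((1 - Mr^-1) * a x + Mr^-1).
    rewrite mulr_sumr -[X in _ + X]mulr1 -sumq mulr_sumr -big_split /=.
    by apply: eq_bigr => x _; ring.
  apply: ler_sum => x _; apply: ler_wpM2l; first exact: q_ge0.
  exact: aux_b.
have s1 : \sum_x q x * retr (minmx (W x) (Mr%:C *: posmx B)) = 1 - \sum_x q x * b x.
  under eq_bigr do rewrite m1.
  transitivity (\sum_x (q x - q x * b x)); first by apply: eq_bigr => x _; ring.
  by rewrite sumrB sumq.
have s2 : \sum_x q x * retr (minmx (W x + Mr%:C *: negmx B) (Mr%:C *: posmx B)) =
    1 + Mr * retr (negmx B) - \sum_x q x * a x.
  under eq_bigr do rewrite m2.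
  transitivity (\sum_x (q x * (1 + Mr * retr (negmx B)) - q x * a x)).
    by apply: eq_bigr => x _; ring.
  by rewrite sumrB sum_qc.
have eR : retr B = retr (posmx B) - retr (negmx B) by rewrite -{1}eB retrB.
have hm : Mr^-1 * Mr = 1 by rewrite mulVf // gt_eqF // Mr_gt0.
exact: (aux_E2 erefl s1 s2 eR hm hSb).
Qed.


Lemma aux_tau (g tau c : R) : 0 < g -> 0 < c -> g <= tau * c -> 0 < tau.
Proof.
move=> g0 c0 h; rewrite ltNge; apply/negP => ht.
have : tau * c <= 0 by rewrite pmulr_lle0.
move=> *; lra.
Qed.

Lemma aux_D (g tau s rY A Bw Rq Sq : R) : 0 < g -> 0 < tau ->
  Rq = Mr * A -> Sq = Bw ->
  g <= (- tau * rY + tau * Rq) + tau * (s - Sq) ->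
  rY + (Bw - Mr * A) < s.
Proof.
move=> g0 t0 -> -> h.
have : 0 < tau * (s - (rY + (Bw - Mr * A))).
  have -> : tau * (s - (rY + (Bw - Mr * A))) = - tau * rY + tau * (Mr * A) + tau * (s - Bw).
    by ring.
  exact: lt_le_trans g0 h.
by rewrite pmulr_rgt0 // subr_gt0.
Qed.

Lemma retr_pproj (Z : mx) : Z \is hermsymmx -> retr (pproj Z *m Z) = retr (posmx Z).
Proof. by move=> hZ; rewrite /retr tr_pproj. Qed.

Lemma stepD (Sst : R) (hS : forall L, Box L -> Sm L = 1%:M -> sig L <= Sst) (d : R) :
  0 < d -> exists B, B \is hermsymmx /\ 1 - Sst - d <= lemma2_obj Mr W q B.
Proof.
move=> d0; have [L0 [hL0 hC]] := stepC hS d0.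
have g0 : 0 < (d / 2) ^+ 2 / 2 by rewrite divr_gt0 // ?exprn_gt0 // divr_gt0 // ltr0n.
move: ((d / 2) ^+ 2 / 2) g0 hC => g g0 hC.
have hU := herm_E hL0.
move: (1%:M - Sm L0) hU hC => U hU hC.
have sq := hS qI qI_box qI_sum; rewrite qI_sig in sq.
have t0 : 0 < Sst + d - sig L0.
  have := hC qI qI_box; rewrite qI_sum subrr mulmx0 /retr mxtrace0 qI_sig /=.
  rewrite add0r => h; apply: (aux_tau g0 _ h); lra.
move: (Sst + d - sig L0) t0 hC => tau t0 hC.
pose Y : mx := (- tau^-1)%:C *: U.
have hY : Y \is hermsymmx by exact: herm_scale.
have eU : U = (- tau)%:C *: Y.
  rewrite /Y scalerA -rmorphM /= mulrNN mulfV ?scale1r //; exact: lt0r_neq0.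
clearbody Y; subst U.
pose P := fun x => pproj (W x - Mr%:C *: Y).
have hWY : forall x, W x - Mr%:C *: Y \is hermsymmx.
  move=> x; apply: herm_sub; [exact: psd_herm (W_psd x) | exact: herm_scale].
have tP : forall x, retr (P x *m W x) - Mr * retr (P x *m Y) = retr (posmx (W x - Mr%:C *: Y)).
  move=> x; rewrite -(retr_pproj (hWY x)).
  by rewrite mulmxBr retrB -scalemxAr retrZ.
have pP : forall x, psdmx (P x) by move=> x; exact: psd_pproj.
have p1P : forall x, psdmx (1%:M - P x) by move=> x; exact: psd_1_pproj.
clearbody P.
pose L1 := fun x => (Mr * q x)%:C *: P x.
have mq0 : forall x, 0 <= Mr * q x by move=> x; apply: mulr_ge0; [exact: ltW Mr_gt0 | exact: q_ge0].
have bL1 : Box L1.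
  move=> x; split; first exact: (psd_scale (mq0 x) (pP x)).
  rewrite /L1 -scalerBr; exact: (psd_scale (mq0 x) (p1P x)).
have h := hC L1 bL1.
have e1 : retr ((- tau)%:C *: Y *m (1%:M - Sm L1)) =
    - tau * retr Y + tau * (\sum_x Mr * q x * retr (P x *m Y)).
  rewrite mulmxBr mulmx1 retrB retrZ /Sm mulmx_sumr retr_sum.
  rewrite [X in _ - X](_ : _ = \sum_x (- tau * (Mr * q x * retr (P x *m Y)))).
    by rewrite -mulr_sumr; ring.
  apply: eq_bigr => x _; rewrite /L1 -scalemxAl -scalemxAr !retrZ.
  by rewrite /retr mxtrace_mulC.
have e2 : sig L1 = \sum_x q x * retr (P x *m W x).
  rewrite /sig mulr_sumr; apply: eq_bigr => x _.
  rewrite /L1 -scalemxAl retrZ mulrA mulrA mulVf ?mul1r //; exact: lt0r_neq0 Mr_gt0.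
have e3 : \sum_x q x * retr (posmx (W x - Mr%:C *: Y)) =
    \sum_x q x * retr (P x *m W x) - Mr * \sum_x q x * retr (P x *m Y).
  rewrite mulr_sumr -sumrB; apply: eq_bigr => x _; rewrite -tP; ring.
have e4 : \sum_x Mr * q x * retr (P x *m Y) = Mr * \sum_x q x * retr (P x *m Y).
  by rewrite mulr_sumr; apply: eq_bigr => x _; ring.
rewrite e1 e2 in h.
have hD := aux_D g0 t0 e4 erefl h.
exists Y; split => //.
apply: le_trans (stepE hY); rewrite e3.
move: hD; move: (retr Y) (\sum_x q x * retr (P x *m W x)) (\sum_x q x * retr (P x *m Y)).
move=> *; lra.
Qed.

End Main.
Lemma succ_le1 (R : realType) (X : finType) (n : nat) (W : X -> 'M[R[i]]_n) (M : nat) :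
  (forall x, density (W x)) -> (0 < M)%N ->
  forall s, (exists (Lam : X -> 'M[R[i]]_n) (p : X -> R),
      [/\ \sum_(x : X) Lam x = 1%:M,
          forall x, psdmx (Lam x) /\ loewner_le (Lam x) ((p x)%:C *: 1%:M),
          forall x, 0 <= p x,
          \sum_(x : X) p x = (M%:R : R) &
          s = (M%:R : R)^-1 * \sum_(x : X) retr (Lam x *m W x)]) -> s <= 1.
Proof.
move=> hW hM s [Lam [p [_ hL hp hs ->]]].
have M0 : 0 < (M%:R : R) by rewrite ltr0n.
rewrite ler_pdivrMl // mulr1 -hs; apply: ler_sum => x _.
have := cbound (proj1 (hW x)) (proj2 (hL x)).
by case: (hW x) => _ h; rewrite /retr h /= mulr1.
Qed.

Theorem lemma2 (R : realType) (X : finType) (n : nat)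
    (W : X -> 'M[R[i]]_n) (M : nat) :
  (forall x, density (W x)) ->
  (0 < M)%N ->
  (eps_NS (M%:R : R) W <=
   ereal_inf [set v | exists p : X -> R, distribution p /\
     v = ereal_sup [set (lemma2_obj (M%:R : R) W p B)%:E |
                    B in [set B : 'M[R[i]]_n | B \is hermsymmx]]])%E.
Proof.
move=> hW hM; apply/ereal_infP => v [p [hp ->]].
set NS := ns_success (M%:R : R) W.
have hub : (NS <= 1%:E)%E.
  apply: ge_ereal_sup => y [s hs <-]; rewrite lee_fin.
  exact: (succ_le1 hW hM hs).
have hS : forall L, Box M p L -> Sm L = 1%:M -> sig W M L <= fine NS.
  move=> L hL hL1.
  have hin : (NS >= (sig W M L)%:E)%E.
    apply: ereal_sup_ubound; exists (sig W M L) => //.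
    exists L, (fun x => (M%:R : R) * p x); split.
    - exact: hL1.
    - by move=> x; case: (hL x) => h1 h2; split.
    - by move=> x; apply: mulr_ge0; [rewrite ler0n | case: hp].
    - by rewrite -mulr_sumr; case: hp => _ ->; rewrite mulr1.
    - by [].
  have hfin : NS \is a fin_num.
    apply/fin_numPlt/andP; split.
      by apply: (lt_le_trans _ hin); rewrite ltNye.
    by apply: (le_lt_trans hub); rewrite ltey.
  by rewrite -lee_fin fineK.
have hin0 : ((sig W M (qI n p))%:E <= NS)%E.
  apply: ereal_sup_ubound; exists (sig W M (qI n p)) => //.
  exists (qI n p), (fun x => (M%:R : R) * p x); split.
  - by have := qI_sum n hp; rewrite /Sm.
  - by move=> x; case: (qI_box n hM hp x) => h1 h2; split.
  - by move=> x; apply: mulr_ge0; [rewrite ler0n | case: hp].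
  - by rewrite -mulr_sumr; case: hp => _ ->; rewrite mulr1.
  - by [].
have hfin : NS \is a fin_num.
  apply/fin_numPlt/andP; split; last by apply: (le_lt_trans hub); rewrite ltey.
  by apply: (lt_le_trans _ hin0); rewrite ltNye.
rewrite /eps_NS -/NS -(fineK hfin) -EFinB.
apply/lee_addgt0Pr => e e0.
have [B [hB hBo]] := stepD hW hM hp hS e0.
have -> : (1 - fine NS)%:E = ((1 - fine NS - e)%:E + e%:E)%E by rewrite -EFinD subrK.
apply: leeD2r; apply: le_trans (_ : (lemma2_obj (M%:R : R) W p B)%:E <= _)%E.
  by rewrite lee_fin.
by apply: ereal_sup_ubound; exists B.
Qed.
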